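(* Let $K$ be a square with edges parallel to the coordinate axes and $k\ge1$ an integer. Let $V(K)=\mathcal Q_k(K)$, $\bm W(K)=[\mathcal Q_k(K)]^2$, and $\bm M(\partial K)=\{\bm\mu:\bm\mu|_F=\bm n\times p_k\text{ for some }p_k\in\mathcal P_k(F),\text{ for each edge }F\subset\partial K\}$. Then $I_M(V(K)\times\bm W(K))=2$.
   Context: $\mathcal Q_k$ denotes polynomials in two variables of degree at most $k$ in each variable; $\mathcal P_k(F)$ polynomials of degree at most $k$ on the edge $F$. Conventions in 2D: $\nabla\times\bm v=-\partial_yv_1+\partial_xv_2$, $\nabla\times p=(\partial_yp,-\partial_xp)^T$, $\bm n\times\bm v=-n_2v_1+n_1v_2$, $\bm n\times p=(n_2p,-n_1p)^T$, $\bm n\times\bm w\times\bm n:=\bm w-(\bm w\cdot\bm n)\bm n$, $\bm n$ the unit outward normal. $I_M(V(K)\times\bm W(K)):=\dim\bm M(\partial K)-\dim\{\bm n\times v|_{\partial K}:v\in V(K),\nabla\times v=\bm0\}-\dim\{\bm n\times\bm w\times\bm n|_{\partial K}:\bm w\in\bm W(K),\nabla\times\bm w=0\}$. *)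

(* Defs.v *)
From HB Require Import structures.
From mathcomp Require Import all_boot all_order all_algebra.
Set Implicit Arguments. Unset Strict Implicit. Unset Printing Implicit Defensive.
Import Order.TTheory GRing.Theory Num.Theory.
Local Open Scope ring_scope.

Section Defs.
Variable R : realFieldType.

(* A polynomial in two variables x, y is p : {poly {poly R}},
   p = \sum_j p_j(x) Y^j ; its value at (x,y) is p.[y%:P].[x]. *)
Definition ev2 (p : {poly {poly R}}) (x y : R) : R := (p.[y%:P]).[x].

Definition dx (p : {poly {poly R}}) : {poly {poly R}} := map_poly deriv p.
Definition dy (p : {poly {poly R}}) : {poly {poly R}} := deriv p.

Definition Qk (k : nat) (p : {poly {poly R}}) : Prop :=
  (size p <= k.+1)%N /\ forall j : nat, (size (p`_j)%R <= k.+1)%N.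

Definition vec2 (u1 u2 : R) : 'rV[R]_2 :=
  \row_(i < 2) (if i == ord0 then u1 else u2).
Definition c1 (v : 'rV[R]_2) : R := v ord0 ord0.
Definition c2 (v : 'rV[R]_2) : R := v ord0 (lift ord0 ord0).

(* Square K = [a, a+h] x [b, b+h]; edges numbered
   0 : bottom (y = b), 1 : right (x = a+h), 2 : top (y = b+h), 3 : left (x = a). *)
Definition on_edge (a b h : R) (i : 'I_4) (x y : R) : Prop :=
  match nat_of_ord i with
  | 0%N => y = b /\ a <= x <= a + h
  | 1%N => x = a + h /\ b <= y <= b + h
  | 2%N => y = b + h /\ a <= x <= a + h
  | _ => x = a /\ b <= y <= b + h
  end.

Definition normal (i : 'I_4) : 'rV[R]_2 :=
  match nat_of_ord i with
  | 0%N => vec2 0 (-1)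
  | 1%N => vec2 1 0
  | 2%N => vec2 0 1
  | _ => vec2 (-1) 0
  end.

(* the free coordinate along edge i (parametrizes P_k(F)) *)
Definition edge_coord (i : 'I_4) (x y : R) : R :=
  match nat_of_ord i with
  | 0%N => x | 1%N => y | 2%N => x | _ => y
  end.

(* Boundary functions: functions on the disjoint union of the four closed
   edges, i.e. on ('I_4 * (R * R)), considered only on the points
   (i,(x,y)) with on_edge i x y. *)
Definition bpt := ('I_4 * (R * R))%type.
Definition onbd (a b h : R) (z : bpt) : Prop := on_edge a b h z.1 z.2.1 z.2.2.

Definition ncross_s (n : 'rV[R]_2) (p : R) : 'rV[R]_2 := vec2 (c2 n * p) (- c1 n * p).
(* n x w x n = w - (w.n) n *)
Definition ntan (n w : 'rV[R]_2) : 'rV[R]_2 := w - (c1 w * c1 n + c2 w * c2 n) *: n.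

(* dim of a set S of functions X -> 'rV_2, taken after restriction to D:
   there is a basis of n elements of S, linearly independent on D,
   such that every element of S agrees on D with a linear combination. *)
Definition has_dim_on (X : Type) (D : X -> Prop) (S : (X -> 'rV[R]_2) -> Prop) (n : nat) : Prop :=
  exists e : 'I_n -> X -> 'rV[R]_2,
    (forall i, S (e i)) /\
    (forall c : 'I_n -> R, (forall z, D z -> \sum_(i < n) c i *: e i z = 0) -> forall i, c i = 0) /\
    (forall f, S f -> exists c : 'I_n -> R, forall z, D z -> f z = \sum_(i < n) c i *: e i z).

Definition Mspace (k : nat) (f : bpt -> 'rV[R]_2) : Prop :=
  exists p : 'I_4 -> {poly R}, (forall i, (size (p i) <= k.+1)%N) /\
    forall z : bpt, f z = ncross_s (normal z.1) (p z.1).[edge_coord z.1 z.2.1 z.2.2].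

(* { n x v |_dK : v in Q_k, curl v = 0 }, curl v = (d_y v, - d_x v) *)
Definition Vtraces (k : nat) (f : bpt -> 'rV[R]_2) : Prop :=
  exists v : {poly {poly R}}, Qk k v /\ dy v = 0 /\ dx v = 0 /\
    forall z : bpt, f z = ncross_s (normal z.1) (ev2 v z.2.1 z.2.2).

(* { n x w x n |_dK : w in [Q_k]^2, curl w = - d_y w1 + d_x w2 = 0 } *)
Definition Wtraces (k : nat) (f : bpt -> 'rV[R]_2) : Prop :=
  exists w1 w2 : {poly {poly R}}, Qk k w1 /\ Qk k w2 /\ dx w2 - dy w1 = 0 /\
    forall z : bpt, f z = ntan (normal z.1) (vec2 (ev2 w1 z.2.1 z.2.2) (ev2 w2 z.2.1 z.2.2)).

Definition I_M_eq (a b h : R) (k : nat) (m : int) : Prop :=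
  exists dM dV dW : nat,
    has_dim_on (onbd a b h) (Mspace k) dM /\
    has_dim_on (onbd a b h) (Vtraces k) dV /\
    has_dim_on (onbd a b h) (Wtraces k) dW /\
    (dM%:Z - dV%:Z - dW%:Z = m)%R.

End Defs.

(* Main.v *)
Require Import Defs.
From mathcomp Require Import all_boot all_order all_algebra.
From mathcomp Require Import zify ring lra.
Import Order.TTheory GRing.Theory Num.Theory.
Local Open Scope ring_scope.
Set Implicit Arguments. Unset Strict Implicit. Unset Printing Implicit Defensive.

Section Aux.
Variable R : realFieldType.

Lemma poly_vanish (a h : R) (p : {poly R}) :
  0 < h -> (forall x, a <= x <= a + h -> p.[x] = 0) -> p = 0.
Proof.
move=> h0 Hv; apply/eqP; apply: contraT => pn0.
set n := size p.
have n0 : (0 < n)%N by rewrite lt0n size_poly_eq0.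
pose f := fun i : nat => a + h * (i%:R / n%:R).
have nR : 0 < (n%:R : R) by rewrite ltr0n.
have : (size (mkseq f n) < size p)%N.
  apply: max_poly_roots => //.
  - apply/allP => x /mapP [i]; rewrite mem_iota add0n => /andP [_ iln] ->.
    rewrite /root; apply/eqP; apply: Hv.
    have f0 : 0 <= h * (i%:R / n%:R) by apply: mulr_ge0; [exact: ltW | apply: divr_ge0; [exact: ler0n | exact: ltW]].
    have fh : h * (i%:R / n%:R) <= h.
      apply: ler_piMr; first exact: ltW. by rewrite ler_pdivrMr // mul1r ler_nat; exact: ltnW.
    rewrite /f; apply/andP; split; lra.
  - apply/mkseq_uniqP => i j _ _; rewrite /f => /addrI /(mulfI (lt0r_neq0 h0)).
    move/(mulIf (invr_neq0 (lt0r_neq0 nR))) => /eqP; rewrite eqr_nat => /eqP //.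
by rewrite size_mkseq ltnn.
Qed.

Lemma poly_vanish_sum (h : R) (n : nat) (g : nat -> R) :
  0 < h -> (forall s, 0 <= s <= h -> \sum_(i < n) g i * s ^+ i = 0) ->
  forall i, (i < n)%N -> g i = 0.
Proof.
move=> h0 Hv i lin.
have P0 : \poly_(i < n) g i = 0.
  apply: (@poly_vanish 0 h) => // x; rewrite add0r => hx.
  by rewrite horner_poly; apply: Hv.
by have := congr1 (fun p : {poly R} => p`_i) P0; rewrite coef_poly lin coef0.
Qed.

Lemma vec2_eq (u v u' v' : R) : vec2 u v = vec2 u' v' -> u = u' /\ v = v'.
Proof.
move=> E; split.
  by have := congr1 (fun w : 'rV[R]_2 => w ord0 ord0) E; rewrite !mxE.
by have := congr1 (fun w : 'rV[R]_2 => w ord0 (lift ord0 ord0)) E; rewrite !mxE.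
Qed.

Lemma vec2_0 : vec2 0 0 = 0 :> 'rV[R]_2.
Proof. by apply/rowP => i; rewrite !mxE; case: ifP. Qed.

Lemma vec2D (u v u' v' : R) : vec2 u v + vec2 u' v' = vec2 (u + u') (v + v').
Proof. by apply/rowP => i; rewrite !mxE; case: ifP. Qed.

Lemma vec2Z (c u v : R) : c *: vec2 u v = vec2 (c * u) (c * v).
Proof. by apply/rowP => i; rewrite !mxE; case: ifP. Qed.

Lemma vec2N (u v : R) : - vec2 u v = vec2 (- u) (- v).
Proof. by apply/rowP => i; rewrite !mxE; case: ifP. Qed.

Lemma vec2_sum (I : Type) (r : seq I) (F G : I -> R) :
  \sum_(i <- r) vec2 (F i) (G i) = vec2 (\sum_(i <- r) F i) (\sum_(i <- r) G i).
Proof.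
elim: r => [|x r IH]; first by rewrite !big_nil vec2_0.
by rewrite !big_cons IH vec2D.
Qed.

Lemma c1_vec2 (u v : R) : c1 (vec2 u v) = u. Proof. by rewrite /c1 mxE. Qed.
Lemma c2_vec2 (u v : R) : c2 (vec2 u v) = v. Proof. by rewrite /c2 mxE. Qed.

Definition trv (i : 'I_4) (u v : R) : 'rV[R]_2 :=
  if odd i then vec2 0 v else vec2 u 0.

Lemma ntan_vec2 (i : 'I_4) (u v : R) : ntan (normal R i) (vec2 u v) = trv i u v.
Proof.
rewrite /ntan /trv.
case: i => [[|[|[|[|i]]]] Hi] //=; rewrite /normal /= !c1_vec2 !c2_vec2 vec2Z vec2N vec2D; congr vec2; ring.
Qed.

Lemma ncross_sE (n : 'rV[R]_2) (p : R) : ncross_s n p = p *: ncross_s n 1.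
Proof. by rewrite /ncross_s vec2Z; congr vec2; ring. Qed.

Lemma ncross_normal_neq0 (i : 'I_4) : ncross_s (normal R i) 1 != 0.
Proof.
apply/eqP; rewrite -vec2_0 /ncross_s => /vec2_eq [].
by case: i => [[|[|[|[|i]]]] Hi] //=; rewrite /normal /= !c1_vec2 !c2_vec2 => E1 E2; move: E1 E2; lra.
Qed.

Lemma trv_sum (i : 'I_4) (I : Type) (r : seq I) (c F G : I -> R) :
  \sum_(j <- r) c j *: trv i (F j) (G j) = trv i (\sum_(j <- r) c j * F j) (\sum_(j <- r) c j * G j).
Proof.
rewrite /trv; case: ifP => _; under eq_bigr do rewrite vec2Z;
  rewrite vec2_sum; congr vec2; apply: big1 => j _; ring.
Qed.

End Aux.

Section Polys.
Variable R : realFieldType.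
Implicit Types (p q : {poly {poly R}}).

Lemma size_map_le (f : {poly R} -> {poly R}) (p : {poly {poly R}}) :
  f 0 = 0 -> (size (map_poly f p) <= size p)%N.
Proof.
move=> f0; apply/leq_sizeP => j hj; rewrite coef_map_id0 //.
by rewrite nth_default.
Qed.

Definition shiftX (a : R) p : {poly {poly R}} :=
  map_poly (fun q : {poly R} => q \Po ('X + a%:P)) p.
Definition shiftY (b : R) p : {poly {poly R}} := p \Po ('X + (b%:P)%:P).
Definition shift (a b : R) p := shiftY b (shiftX a p).

Lemma ev2E n p x y : (size p <= n)%N -> ev2 p x y = \sum_(i < n) (p`_i).[x] * y ^+ i.
Proof.
move=> hn; rewrite /ev2 (horner_coef_wide _ hn) horner_sum; apply: eq_bigr => i _.
by rewrite hornerM horner_exp hornerC.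
Qed.

Lemma ev2_shiftX a p x y : ev2 (shiftX a p) x y = ev2 p (x + a) y.
Proof.
rewrite (ev2E _ _ (leqnn (size p))) (ev2E _ _ (size_map_le _ _)) ?comp_poly0 //.
apply: eq_bigr => i _.
rewrite coef_map_id0 ?comp_poly0 // horner_comp; congr (_.[_] * _).
by rewrite hornerD hornerX hornerC.
Qed.
Lemma ev2_shiftY b p x y : ev2 (shiftY b p) x y = ev2 p x (y + b).
Proof. by rewrite /ev2 /shiftY horner_comp hornerD hornerX hornerC polyCD. Qed.

Lemma ev2_shift a b p x y : ev2 (shift a b p) x y = ev2 p (x + a) (y + b).
Proof. by rewrite /shift ev2_shiftY ev2_shiftX. Qed.

Lemma size_comp_lin (q : {poly R}) (a : R) (k : nat) :
  (size q <= k.+1)%N -> (size (q \Po ('X + a%:P)) <= k.+1)%N.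
Proof.
move=> hq; apply: leq_trans (size_comp_poly_leq _ _) _.
by rewrite size_XaddC muln1; case: (size q) hq.
Qed.

Lemma Qk_shiftX k a p : Qk k p -> Qk k (shiftX a p).
Proof.
case=> h1 h2; split.
  by apply: leq_trans h1; apply: size_map_le; rewrite comp_poly0.
by move=> j; rewrite coef_map_id0 ?comp_poly0 //; apply: size_comp_lin.
Qed.

Lemma coef_liftX_exp (b : R) i j :
  ((('X + (b%:P)%:P) ^+ i : {poly {poly R}})`_j) = ((('X + b%:P) ^+ i)`_j)%:P.
Proof.
have -> : ('X + (b%:P)%:P : {poly {poly R}}) = map_poly polyC ('X + b%:P).
  by rewrite rmorphD /= map_polyX map_polyC.
by rewrite -rmorphXn /= coef_map.
Qed.

Lemma comp_polyE_wide (S : nzSemiRingType) n (p q : {poly S}) :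
  (size p <= n)%N -> p \Po q = \sum_(i < n) p`_i *: q ^+ i.
Proof.
move=> hn; rewrite comp_polyE (big_ord_widen n (fun i => p`_i *: q ^+ i) hn).
rewrite big_mkcond /=; apply: eq_bigr => i _; case: ifP => // /negbT.
by rewrite -leqNgt => hi; rewrite nth_default // scale0r.
Qed.

Lemma coef_shiftY b p j :
  (shiftY b p)`_j = \sum_(i < size p) p`_i * ((('X + b%:P) ^+ i)`_j)%:P.
Proof.
rewrite /shiftY coef_comp_poly; apply: eq_bigr => i _; by rewrite coef_liftX_exp.
Qed.

Lemma Qk_shiftY k b p : Qk k p -> Qk k (shiftY b p).
Proof.
case=> h1 h2; split.
  apply: leq_trans (size_comp_poly_leq _ _) _.
  have -> : size ('X + (b%:P)%:P : {poly {poly R}}) = 2 by rewrite size_XaddC.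
  rewrite muln1; case: (size p) h1 => //= n.
move=> j; rewrite coef_shiftY.
elim/big_ind: _ => //; first by rewrite size_poly0.
  by move=> u v hu hv; apply: leq_trans (size_polyD _ _) _; rewrite geq_max hu hv.
move=> i _; apply: leq_trans (size_polyMleq _ _) _.
apply: leq_trans (h2 i); have := size_polyC_leq1 ((('X + b%:P) ^+ i)`_j); lia.
Qed.

Lemma Qk_shift k a b p : Qk k p -> Qk k (shift a b p).
Proof. by move=> h; apply: Qk_shiftY; apply: Qk_shiftX. Qed.

Lemma dx_shiftX a p : dx (shiftX a p) = shiftX a (dx p).
Proof.
apply/polyP => j; rewrite /dx /shiftX !coef_map_id0 ?comp_poly0 ?deriv0 //.
by rewrite deriv_comp derivD derivX derivC addr0 mulr1.
Qed.

Lemma dy_shiftX a p : dy (shiftX a p) = shiftX a (dy p).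
Proof.
apply/polyP => j; rewrite /dy /shiftX coef_deriv !coef_map_id0 ?comp_poly0 //.
by rewrite coef_deriv -!scaler_nat comp_polyZ.
Qed.

Lemma dy_shiftY b p : dy (shiftY b p) = shiftY b (dy p).
Proof.
by rewrite /dy /shiftY deriv_comp derivD derivX derivC addr0 mulr1.
Qed.

Lemma dx_shiftY b p : dx (shiftY b p) = shiftY b (dx p).
Proof.
apply/polyP => j; rewrite /dx /shiftY coef_map_id0 ?deriv0 //.
rewrite (comp_polyE_wide _ (leqnn (size p))).
rewrite (comp_polyE_wide _ (size_map_le _ (deriv0 _))).
rewrite !coef_sum raddf_sum; apply: eq_bigr => i _.
rewrite !coefZ coef_liftX_exp coef_map_id0 ?deriv0 //.
by rewrite /= derivM derivC mulr0 addr0.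
Qed.

Lemma dx_shift a b p : dx (shift a b p) = shift a b (dx p).
Proof. by rewrite /shift dx_shiftY dx_shiftX. Qed.

Lemma dy_shift a b p : dy (shift a b p) = shift a b (dy p).
Proof. by rewrite /shift dy_shiftY dy_shiftX. Qed.

Definition mono (i j : nat) : {poly {poly R}} := ('X^i)%:P * 'X^j.

Lemma coef_mono i j l : (mono i j)`_l = if l == j then 'X^i else 0.
Proof. by rewrite /mono coefCM coefXn; case: eqP => _; rewrite ?mulr1 ?mulr0. Qed.

Lemma ev2_mono i j x y : ev2 (mono i j) x y = x ^+ i * y ^+ j.
Proof. by rewrite /ev2 /mono hornerM hornerC hornerXn hornerM hornerXn horner_exp hornerC. Qed.

Lemma ev2Mn p n x y : ev2 (p *+ n) x y = ev2 p x y *+ n.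
Proof. by rewrite /ev2 !hornerMn. Qed.

Lemma dxMn p n : dx (p *+ n) = dx p *+ n.
Proof.
by apply/polyP => j; rewrite /dx coefMn !coef_map_id0 ?deriv0 // coefMn derivMn.
Qed.

Lemma dyMn p n : dy (p *+ n) = dy p *+ n.
Proof. exact: derivMn. Qed.

Lemma dx_mono i j : dx (mono i j) = mono i.-1 j *+ i.
Proof.
apply/polyP => l; rewrite /dx coefMn coef_map_id0 ?deriv0 // !coef_mono.
by case: eqP => _; rewrite ?derivXn ?deriv0 ?mul0rn.
Qed.

Lemma dy_mono i j : dy (mono i j) = mono i j.-1 *+ j.
Proof. by rewrite /dy /mono deriv_mulC derivXn -mulrnAr. Qed.

Lemma dxdy p : dx (dy p) = dy (dx p).
Proof.
apply/polyP => j; rewrite /dx /dy coef_deriv !coef_map_id0 ?deriv0 //.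
by rewrite coef_deriv derivMn.
Qed.

Lemma Qk0 k : Qk k (0 : {poly {poly R}}).
Proof. by split => [|j]; rewrite ?size_poly0 // coef0 size_poly0. Qed.

Lemma size_Mn_le (S : nzSemiRingType) (r : {poly S}) n : (size (r *+ n) <= size r)%N.
Proof. by apply/leq_sizeP => j hj; rewrite coefMn nth_default // mul0rn. Qed.

Lemma QkMn k p n : Qk k p -> Qk k (p *+ n).
Proof.
case=> h1 h2; split; first by apply: leq_trans (size_Mn_le _ _) h1.
by move=> j; rewrite coefMn; apply: leq_trans (size_Mn_le _ _) (h2 j).
Qed.

Lemma Qk_mono k i j : (i <= k)%N -> (j <= k)%N -> Qk k (mono i j).
Proof.
move=> hi hj; split.
  by apply/leq_sizeP => l hl; rewrite coef_mono; case: eqP => // E; move: hl; rewrite E; lia.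
by move=> l; rewrite coef_mono; case: eqP => _; rewrite ?size_polyXn ?size_poly0.
Qed.

End Polys.

Section MV.
Variable R : realFieldType.

Lemma sum_ord_nat (V : nmodType) N (G : 'I_N.+1 -> V) :
  \sum_(m < N.+1) G m = \sum_(0 <= m < N.+1) G (inord m).
Proof. by rewrite big_mkord; apply: eq_bigr => m _; rewrite inord_val. Qed.

Lemma sum_nat_eqn (V : nmodType) n1 n2 (F : nat -> V) :
  n1 = n2 -> \sum_(0 <= m < n1) F m = \sum_(0 <= m < n2) F m.
Proof. by move=> ->. Qed.

Lemma sum_split_mul (V : nmodType) n K (F : nat -> V) :
  \sum_(0 <= m < n * K) F m = \sum_(0 <= i < n) \sum_(0 <= j < K) F (i * K + j)%N.
Proof.
elim: n => [|n IH]; first by rewrite mul0n !big_geq.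
rewrite mulSnr (@big_cat_nat _ _ _ (n * K)) ?leq_addr //= IH big_nat_recr //=.
congr (_ + _).
rewrite -{1}[(n * K)%N]add0n big_addn addKn; apply: eq_bigr => j _; by rewrite addnC.
Qed.

Definition bpoint (a b h : R) (i : 'I_4) (t : R) : R * R :=
  match nat_of_ord i with
  | 0%N => (t, b) | 1%N => (a + h, t) | 2%N => (t, b + h) | _ => (a, t) end.
Definition bbase (a b : R) (i : 'I_4) : R := if odd i then b else a.

Lemma bpoint_on a b h (i : 'I_4) t : 0 < h -> bbase a b i <= t <= bbase a b i + h ->
  onbd a b h (i, bpoint a b h i t) /\ edge_coord i (bpoint a b h i t).1 (bpoint a b h i t).2 = t.
Proof.
move=> h0; rewrite /onbd /bbase /bpoint /on_edge /edge_coord.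
by case: i => [[|[|[|[|i]]]] Hi] //= ht; (split; [split => //; rewrite ?lexx /= ?ht // ; apply/andP; split; lra|]).
Qed.

Definition eM (k : nat) (m : 'I_(4 * k + 3).+1) (z : bpt R) : 'rV[R]_2 :=
  (((z.1 : nat) == (m %/ k.+1)%N)%:R * (edge_coord z.1 z.2.1 z.2.2) ^+ (m %% k.+1)%N%N) *:
    ncross_s (normal R z.1) 1.

Lemma sum_scaleN (I : finType) (c s : I -> R) (N : 'rV[R]_2) :
  \sum_(i : I) c i *: (s i *: N) = (\sum_(i : I) c i * s i) *: N.
Proof. by rewrite scaler_suml; apply: eq_bigr => i _; rewrite scalerA. Qed.

Lemma dimM (a b h : R) k : 0 < h -> has_dim_on (onbd a b h) (Mspace k) (4 * k + 3).+1.
Proof.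
move=> h0; exists (@eM k); split; [|split].
- move=> m; exists (fun i : 'I_4 => ((i : nat) == (m %/ k.+1)%N)%:R *: 'X^(m %% k.+1)%N%N); split.
    move=> i; apply: leq_trans (size_scale_leq _ _) _; rewrite size_polyXn ltnS.
    by rewrite -ltnS ltn_mod.
  by move=> z; rewrite /eM hornerZ hornerXn -ncross_sE.
- move=> c Hc m0.
  have m0lt : (m0 %/ k.+1 < 4)%N by rewrite ltn_divLR //; have := ltn_ord m0; lia.
  pose i0 : 'I_4 := Ordinal m0lt.
  pose P : {poly R} := \sum_(m < (4 * k + 3).+1) (c m * ((i0 : nat) == (m %/ k.+1)%N)%:R) *: 'X^(m %% k.+1)%N%N.
  have P0 : P = 0.
    apply: (@poly_vanish R (bbase a b i0) h) => // t ht.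
    have [hon hco] := bpoint_on h0 ht.
    have := Hc _ hon; rewrite /eM /= hco sum_scaleN => /eqP.
    rewrite scaler_eq0 (negbTE (ncross_normal_neq0 _ _)) orbF => /eqP <-.
    rewrite /P horner_sum; apply: eq_bigr => m _.
    by rewrite hornerZ hornerXn mulrA.
  have := congr1 (fun p : {poly R} => p`_(m0 %% k.+1)%N%N) P0.
  rewrite /P coef_sumMXn coef0 (bigD1 m0) //= eqxx mulr1 big1 ?addr0 //.
  move=> m /andP [/eqP Em nm]; case: eqP; rewrite ?mulr0 // => Ed.
  exfalso; move/eqP: nm; apply; apply: val_inj => /=.
  by rewrite [LHS](divn_eq m k.+1) [RHS](divn_eq m0 k.+1) Ed Em.
- move=> f [p [hp Hf]].
  exists (fun m : 'I_(4 * k + 3).+1 => (p (inord (m %/ k.+1)%N))`_(m %% k.+1)%N) => z _.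
  rewrite Hf /eM sum_scaleN ncross_sE; congr (_ *: _).
  rewrite (horner_coef_wide _ (hp z.1)) [RHS]sum_ord_nat (@sum_nat_eqn _ (4 * k + 3).+1 (4 * k.+1)%N); last by lia.
  rewrite sum_split_mul.
  have E : forall i j, (j < k.+1)%N -> ((i * k.+1 + j) %/ k.+1 = i /\ (i * k.+1 + j) %% k.+1 = j)%N.
    by move=> i j hj; rewrite divnMDl // modnMDl divn_small // modn_small // addn0.
  rewrite (eq_big_nat _ _ (F2 := fun i => ((z.1 : nat) == i)%:R * \sum_(0 <= j < k.+1) (p (inord i))`_j * (edge_coord z.1 z.2.1 z.2.2) ^+ j)); last first.
    move=> i /andP [_ hi]; rewrite big_distrr /=; apply: eq_big_nat => j /andP [_ hj].
    have [E1 E2] := E i j hj.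
    rewrite inordK; last by nia.
    by rewrite E1 E2; ring.
  rewrite big_mkord (bigD1 z.1) //= eqxx mul1r inord_val big_mkord.
  rewrite [X in _ = _ + X]big1 ?addr0 //.
  move=> i ne; case: eqP => [Ei|_]; last by rewrite mul0r.
  by exfalso; move/eqP: ne; apply; apply: val_inj.
Qed.

Lemma deriv0_const (q : {poly R}) : q^`() = 0 -> q = (q`_0)%:P.
Proof.
move=> dq; apply/polyP => i; rewrite coefC; case: i => [|i] //=.
have := congr1 (fun r : {poly R} => r`_i) dq; rewrite coef_deriv coef0 => /eqP.
by rewrite mulrn_eq0 /= => /eqP.
Qed.

Lemma deriv0_constP (q : {poly {poly R}}) : q^`() = 0 -> q = (q`_0)%:P.
Proof.
move=> dq; apply/polyP => i; rewrite coefC; case: i => [|i] //=.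
have := congr1 (fun r : {poly {poly R}} => r`_i) dq; rewrite coef_deriv coef0 => E.
apply/polyP => j; rewrite coef0.
have := congr1 (fun r : {poly R} => r`_j) E; rewrite coefMn coef0 => /eqP.
by rewrite mulrn_eq0 /= => /eqP.
Qed.

Lemma dimV (a b h : R) k : 0 < h -> has_dim_on (onbd a b h) (Vtraces k) 1.
Proof.
move=> h0; exists (fun (_ : 'I_1) (z : bpt R) => ncross_s (normal R z.1) 1); split; [|split].
- move=> _; exists 1; split; [|split; [|split]].
  + split; first by rewrite size_poly1.
    by move=> j; rewrite coef1; case: (j == 0)%N; rewrite ?size_poly1 ?size_poly0.
  + by rewrite /dy -polyC1 derivC.
  + by rewrite /dx -!polyC1 map_polyC /= derivC.
  + by move=> z; rewrite /ev2 !hornerC.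
- move=> c Hc i; rewrite (ord1 i).
  have hon : onbd a b h (ord0 : 'I_4, (a, b)) by rewrite /onbd /on_edge /=; split => //; apply/andP; split; lra.
  have := Hc _ hon; rewrite big_ord1 => /eqP; rewrite scaler_eq0 (negbTE (ncross_normal_neq0 _ _)) orbF.
  by move/eqP.
- move=> f [v [_ [dyv [dxv Hf]]]].
  have Ev : v = (v`_0)%:P by apply: deriv0_constP.
  have E0 : v`_0 = (v`_0`_0)%:P.
    apply: deriv0_const; have := congr1 (fun r : {poly {poly R}} => r`_0) dxv.
    by rewrite /dx coef_map_id0 ?deriv0 // coef0.
  exists (fun _ => v`_0`_0) => z _; rewrite big_ord1 Hf ncross_sE; congr (_ *: _).
  by rewrite /ev2 {1}Ev hornerC {1}E0 hornerC.
Qed.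

End MV.

Section W.
Variable R : realFieldType.
Variables (a b h : R) (k : nat).

Definition g1 (i j : nat) (s t : R) : R := i%:R * s ^+ i.-1 * t ^+ j.
Definition g2 (i j : nat) (s t : R) : R := j%:R * s ^+ i * t ^+ j.-1.
Definition G (i j : nat) (z : bpt R) : 'rV[R]_2 :=
  trv z.1 (g1 i j (z.2.1 - a) (z.2.2 - b)) (g2 i j (z.2.1 - a) (z.2.2 - b)).

Lemma WG (i j : nat) : (i = 0 \/ (i <= k.+2 /\ j <= k.+1))%N ->
  (j = 0 \/ (i <= k.+1 /\ j <= k.+2))%N -> Wtraces k.+1 (G i j).
Proof.
move=> Hi Hj.
exists (shift (- a) (- b) (mono R i.-1 j *+ i)), (shift (- a) (- b) (mono R i j.-1 *+ j)).
split; [|split; [|split]].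
- apply: Qk_shift; case: Hi => [->|[hi hj]]; first by rewrite mulr0n; apply: Qk0.
  by apply: QkMn; apply: Qk_mono => //; lia.
- apply: Qk_shift; case: Hj => [->|[hi hj]]; first by rewrite mulr0n; apply: Qk0.
  by apply: QkMn; apply: Qk_mono => //; lia.
- rewrite dx_shift dy_shift dxMn dyMn dx_mono dy_mono -!mulrnA mulnC subrr.
  done.
- move=> z; rewrite ntan_vec2 /G !ev2_shift !ev2Mn !ev2_mono /g1 /g2.
  by congr trv; rewrite -mulrA mulr_natl.
Qed.

Definition ix (m : nat) : nat :=
  if (m < k.+2)%N then m.+1 else if (m < 2 * k + 4)%N then 0%N
  else if (m < 3 * k + 5)%N then (m - (2 * k + 4)).+1 else 1%N.
Definition jx (m : nat) : nat :=
  if (m < k.+2)%N then 0%N else if (m < 2 * k + 4)%N then (m - k.+2).+1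
  else if (m < 3 * k + 5)%N then 1%N else (m - (3 * k + 5)).+2.

Lemma fam1 p : (p < k.+2)%N -> ix p = p.+1 /\ jx p = 0%N.
Proof. by rewrite /ix /jx => hp; rewrite hp. Qed.
Lemma fam2 q : (q < k.+2)%N -> ix (k.+2 + q) = 0%N /\ jx (k.+2 + q) = q.+1.
Proof.
move=> hq; rewrite /ix /jx.
have -> : (k.+2 + q < k.+2)%N = false by lia.
have -> : (k.+2 + q < 2 * k + 4)%N = true by lia.
by split => //; congr S; lia.
Qed.
Lemma fam3 p : (p < k.+1)%N -> ix (2 * k + 4 + p) = p.+1 /\ jx (2 * k + 4 + p) = 1%N.
Proof.
move=> hp; rewrite /ix /jx.
have -> : (2 * k + 4 + p < k.+2)%N = false by lia.
have -> : (2 * k + 4 + p < 2 * k + 4)%N = false by lia.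
have -> : (2 * k + 4 + p < 3 * k + 5)%N = true by lia.
by split => //; congr S; lia.
Qed.
Lemma fam4 q : (q < k)%N -> ix (3 * k + 5 + q) = 1%N /\ jx (3 * k + 5 + q) = q.+2.
Proof.
move=> hq; rewrite /ix /jx.
have -> : (3 * k + 5 + q < k.+2)%N = false by lia.
have -> : (3 * k + 5 + q < 2 * k + 4)%N = false by lia.
have -> : (3 * k + 5 + q < 3 * k + 5)%N = false by lia.
by split => //; congr S; congr S; lia.
Qed.

Lemma split4 (V : nmodType) (F : nat -> V) :
  \sum_(0 <= m < (4 * k + 4).+1) F m =
  \sum_(0 <= p < k.+2) F p + \sum_(0 <= q < k.+2) F (k.+2 + q)%N
  + \sum_(0 <= p < k.+1) F (2 * k + 4 + p)%N + \sum_(0 <= q < k) F (3 * k + 5 + q)%N.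
Proof.
rewrite (@big_cat_nat _ _ _ (3 * k + 5)) //=; last by lia.
rewrite (@big_cat_nat _ _ _ (2 * k + 4)) //=; last by lia.
rewrite (@big_cat_nat _ _ _ k.+2) //=; last by lia.
have sh : forall (o n e : nat), e = (o + n)%N -> \sum_(o <= m < e) F m = \sum_(0 <= q < n) F (o + q)%N.
  move=> o n e ->; rewrite -{1}[o]add0n big_addn addKn; apply: eq_bigr => q _; by rewrite addnC.
rewrite (sh k.+2 k.+2) ?(sh (2 * k + 4)%N k.+1) ?(sh (3 * k + 5)%N k) //; lia.
Qed.

Definition eW (m : 'I_(4 * k + 4).+1) (z : bpt R) : 'rV[R]_2 := G (ix m) (jx m) z.

Lemma eW_in m : Wtraces k.+1 (eW m).
Proof.
apply: WG; rewrite /ix /jx; have := ltn_ord m;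
  (case: ifP => ?; [|case: ifP => ?; [|case: ifP => ?]]); lia.
Qed.

Definition Sp (g : bpt R -> 'rV[R]_2) :=
  exists c : 'I_(4 * k + 4).+1 -> R, forall z, onbd a b h z -> g z = \sum_m c m *: eW m z.

Lemma Sp_ext g g' : (forall z, onbd a b h z -> g z = g' z) -> Sp g' -> Sp g.
Proof. by move=> E [c Hc]; exists c => z hz; rewrite E // Hc. Qed.

Lemma Sp0 : Sp (fun _ => 0).
Proof. by exists (fun _ => 0) => z _; rewrite big1 // => m _; rewrite scale0r. Qed.

Lemma SpD g g' : Sp g -> Sp g' -> Sp (fun z => g z + g' z).
Proof.
move=> [c Hc] [c' Hc']; exists (fun m => c m + c' m) => z hz.
by rewrite Hc // Hc' // -big_split; apply: eq_bigr => m _; rewrite scalerDl.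
Qed.

Lemma SpZ r g : Sp g -> Sp (fun z => r *: g z).
Proof.
move=> [c Hc]; exists (fun m => r * c m) => z hz.
by rewrite Hc // scaler_sumr; apply: eq_bigr => m _; rewrite scalerA.
Qed.

Lemma Sp_sum n (F : nat -> bpt R -> 'rV[R]_2) :
  (forall i, (i < n)%N -> Sp (F i)) -> Sp (fun z => \sum_(0 <= i < n) F i z).
Proof.
elim: n => [|n IH] H; first by apply: (Sp_ext (g' := fun _ => 0)) => [z _|]; rewrite ?big_geq //; apply: Sp0.
apply: (Sp_ext (g' := fun z => \sum_(0 <= i < n) F i z + F n z)) => [z _|]; first by rewrite big_nat_recr.
apply: SpD; last exact: H.
by apply: IH => i hi; apply: H; lia.
Qed.

Lemma Sp_basis (m : 'I_(4 * k + 4).+1) : Sp (eW m).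
Proof.
exists (fun m' => (m' == m)%:R) => z _.
rewrite (bigD1 m) //= eqxx scale1r big1 ?addr0 // => m' /negbTE ->; by rewrite scale0r.
Qed.

Lemma Sp_fam (m : nat) : (m < (4 * k + 4).+1)%N -> Sp (G (ix m) (jx m)).
Proof.
move=> hm; apply: (Sp_ext (g' := eW (Ordinal hm))) => [z _|]; last exact: Sp_basis.
by [].
Qed.

Lemma eW_sum (c : 'I_(4 * k + 4).+1 -> R) z :
  \sum_m c m *: eW m z = trv z.1 (\sum_m c m * g1 (ix m) (jx m) (z.2.1 - a) (z.2.2 - b))
                                (\sum_m c m * g2 (ix m) (jx m) (z.2.1 - a) (z.2.2 - b)).
Proof. by rewrite -trv_sum. Qed.

Lemma sum_ord_natF N (c : 'I_N.+1 -> R) (F : nat -> R) :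
  \sum_(m < N.+1) c m * F m = \sum_(0 <= m < N.+1) c (inord m) * F m.
Proof. by rewrite big_mkord; apply: eq_bigr => m _; rewrite inord_val. Qed.

Lemma S1E (c : 'I_(4 * k + 4).+1 -> R) s t :
  \sum_m c m * g1 (ix m) (jx m) s t =
    \sum_(0 <= p < k.+2) c (inord p) * (p.+1%:R * s ^+ p)
  + \sum_(0 <= p < k.+1) c (inord (2 * k + 4 + p)) * (p.+1%:R * s ^+ p * t)
  + \sum_(0 <= q < k) c (inord (3 * k + 5 + q)) * t ^+ q.+2.
Proof.
rewrite (sum_ord_natF c (fun n => g1 (ix n) (jx n) s t)) split4.
rewrite [X in X + _ + _ + _](eq_big_nat _ _ (F2 := fun p => c (inord p) * (p.+1%:R * s ^+ p))); last first.
  by move=> p /andP [_ hp]; have [-> ->] := fam1 hp; rewrite /g1 /= expr0 mulr1.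
rewrite [X in _ + X + _ + _]big1_seq ?addr0; last first.
  by move=> q; rewrite mem_index_iota => /andP [_ hq]; have [-> ->] := fam2 hq; rewrite /g1 /= !mul0r mulr0.
congr (_ + _ + _); apply: eq_big_nat.
  by move=> p /andP [_ hp]; have [-> ->] := fam3 hp; rewrite /g1 /= expr1.
by move=> q /andP [_ hq]; have [-> ->] := fam4 hq; rewrite /g1 /= expr0 !mul1r.
Qed.

Lemma S2E (c : 'I_(4 * k + 4).+1 -> R) s t :
  \sum_m c m * g2 (ix m) (jx m) s t =
    \sum_(0 <= q < k.+2) c (inord (k.+2 + q)) * (q.+1%:R * t ^+ q)
  + \sum_(0 <= p < k.+1) c (inord (2 * k + 4 + p)) * s ^+ p.+1
  + \sum_(0 <= q < k) c (inord (3 * k + 5 + q)) * (q.+2%:R * s * t ^+ q.+1).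
Proof.
rewrite (sum_ord_natF c (fun n => g2 (ix n) (jx n) s t)) split4.
rewrite [X in X + _ + _ + _]big1_seq ?add0r; last first.
  by move=> p; rewrite mem_index_iota => /andP [_ hp]; have [-> ->] := fam1 hp; rewrite /g2 /= !mul0r mulr0.
congr (_ + _ + _); apply: eq_big_nat.
- by move=> q /andP [_ hq]; have [-> ->] := fam2 hq; rewrite /g2 /= expr0 mulr1.
- by move=> p /andP [_ hp]; have [-> ->] := fam3 hp; rewrite /g2 /= expr0 !mul1r mulr1.
- by move=> q /andP [_ hq]; have [-> ->] := fam4 hq; rewrite /g2 /= expr1.
Qed.

Lemma trv0_even (i : 'I_4) (U V : R) : trv i U V = 0 -> ~~ odd i -> U = 0.
Proof. by rewrite /trv => E /negbTE o; move: E; rewrite o -(vec2_0 R) => /vec2_eq []. Qed.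
Lemma trv0_odd (i : 'I_4) (U V : R) : trv i U V = 0 -> odd i -> V = 0.
Proof. by rewrite /trv => E o; move: E; rewrite o -(vec2_0 R) => /vec2_eq []. Qed.

Lemma natS_neq0 n : (n.+1%:R : R) != 0.
Proof. by rewrite pnatr_eq0. Qed.

Lemma W_indep (c : 'I_(4 * k + 4).+1 -> R) : 0 < h ->
  (forall z, onbd a b h z -> \sum_m c m *: eW m z = 0) -> forall m, c m = 0.
Proof.
move=> h0 Hc.
pose e0 : 'I_4 := ord0. pose e1 : 'I_4 := @Ordinal 4 1 isT.
pose e2 : 'I_4 := @Ordinal 4 2 isT. pose e3 : 'I_4 := @Ordinal 4 3 isT.
have B1 : forall s, 0 <= s <= h -> \sum_(p < k.+2) (c (inord p) * p.+1%:R) * s ^+ p = 0.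
  move=> s hs.
  have hon : onbd a b h (e0, (a + s, b)) by rewrite /onbd /on_edge /=; split => //; apply/andP; split; lra.
  have := Hc _ hon; rewrite eW_sum => /trv0_even /(_ isT); rewrite /= subrr S1E.
  rewrite [X in _ + X + _]big1 ?[X in _ + X]big1 ?addr0; first last.
  - by move=> q _; rewrite ?expr0n /= ?mulr0.
  - by move=> p _; rewrite ?expr0n /= ?mulr0.
  rewrite (_ : a + s - a = s); last by ring.
  by rewrite big_mkord => E; rewrite -[RHS]E; apply: eq_bigr => p _; rewrite mulrA.
have C1 : forall p, (p < k.+2)%N -> c (inord p) = 0.
  move=> p hp; have := @poly_vanish_sum R h k.+2 (fun p => c (inord p) * p.+1%:R) h0 B1 p hp => /eqP.
  by rewrite mulf_eq0 (negbTE (natS_neq0 _)) orbF => /eqP.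
have B2 : forall t, 0 <= t <= h -> \sum_(q < k.+2) (c (inord (k.+2 + q)) * q.+1%:R) * t ^+ q = 0.
  move=> t ht.
  have hon : onbd a b h (e3, (a, b + t)) by rewrite /onbd /on_edge /=; split => //; apply/andP; split; lra.
  have := Hc _ hon; rewrite eW_sum => /trv0_odd /(_ isT); rewrite /= subrr S2E.
  rewrite [X in _ + X + _]big1 ?[X in _ + X]big1 ?addr0; first last.
  - by move=> q _; rewrite ?expr0n /= ?mulr0 ?mul0r.
  - by move=> q _; rewrite !(mulr0, mul0r).
  rewrite (_ : b + t - b = t); last by ring.
  by rewrite big_mkord => E; rewrite -[RHS]E; apply: eq_bigr => p _; rewrite mulrA.
have C2 : forall q, (q < k.+2)%N -> c (inord (k.+2 + q)) = 0.
  move=> q hq; have := @poly_vanish_sum R h k.+2 (fun q => c (inord (k.+2 + q)) * q.+1%:R) h0 B2 q hq => /eqP.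
  by rewrite mulf_eq0 (negbTE (natS_neq0 _)) orbF => /eqP.
pose K0 := \sum_(0 <= p < k.+1) c (inord (2 * k + 4 + p)) * h ^+ p.+1.
pose gam := fun r : nat => if r is q.+1 then c (inord (3 * k + 5 + q)) * (q.+2%:R * h) else K0.
have B3 : forall t, 0 <= t <= h -> \sum_(r < k.+1) gam r * t ^+ r = 0.
  move=> t ht.
  have hon : onbd a b h (e1, (a + h, b + t)) by rewrite /onbd /on_edge /=; split => //; apply/andP; split; lra.
  have := Hc _ hon; rewrite eW_sum => /trv0_odd /(_ isT); rewrite /= S2E.
  rewrite [X in X + _ + _]big1_seq ?add0r; last first.
    by move=> q; rewrite mem_index_iota => /andP [_ hq]; rewrite C2 // mul0r.
  rewrite (_ : b + t - b = t); last by ring.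
  rewrite (_ : a + h - a = h); last by ring.
  move=> E; rewrite -[RHS]E big_ord_recl /= expr0 mulr1; congr (_ + _).
  rewrite big_mkord; apply: eq_bigr => q _ /=; rewrite /bump /= add1n; ring.
have C4 : forall q, (q < k)%N -> c (inord (3 * k + 5 + q)) = 0.
  move=> q hq; have : (q.+1 < k.+1)%N by lia.
  move=> /(@poly_vanish_sum R h k.+1 gam h0 B3) /= /eqP.
  rewrite !mulf_eq0 (negbTE (natS_neq0 _)) (negbTE (lt0r_neq0 h0)) !orbF.
  by move/eqP.
have B4 : forall s, 0 <= s <= h -> \sum_(p < k.+1) (c (inord (2 * k + 4 + p)) * p.+1%:R * h) * s ^+ p = 0.
  move=> s hs.
  have hon : onbd a b h (e2, (a + s, b + h)) by rewrite /onbd /on_edge /=; split => //; apply/andP; split; lra.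
  have := Hc _ hon; rewrite eW_sum => /trv0_even /(_ isT); rewrite /= S1E.
  rewrite [X in X + _ + _]big1_seq ?add0r; last first.
    by move=> q; rewrite mem_index_iota => /andP [_ hq]; rewrite C1 // mul0r.
  rewrite [X in _ + X]big1_seq ?addr0; last first.
    by move=> q; rewrite mem_index_iota => /andP [_ hq]; rewrite C4 // mul0r.
  rewrite (_ : b + h - b = h); last by ring.
  rewrite (_ : a + s - a = s); last by ring.
  by rewrite big_mkord => E; rewrite -[RHS]E; apply: eq_bigr => p _; ring.
have C3 : forall p, (p < k.+1)%N -> c (inord (2 * k + 4 + p)) = 0.
  move=> p hp; have := @poly_vanish_sum R h k.+1 (fun p => c (inord (2 * k + 4 + p)) * p.+1%:R * h) h0 B4 p hp => /eqP.
  rewrite !mulf_eq0 (negbTE (natS_neq0 _)) (negbTE (lt0r_neq0 h0)) !orbF.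
  by move/eqP.
move=> m; rewrite -(inord_val m); have := ltn_ord m.
case: (ltnP m k.+2) => [h1 _|h1]; first exact: C1.
case: (ltnP m (2 * k + 4)) => [h2 _|h2].
  by rewrite (_ : (m : nat) = k.+2 + (m - k.+2))%N ?C2 //; lia.
case: (ltnP m (3 * k + 5)) => [h3 _|h3 h4].
  by rewrite (_ : (m : nat) = 2 * k + 4 + (m - (2 * k + 4)))%N ?C3 //; lia.
by rewrite (_ : (m : nat) = 3 * k + 5 + (m - (3 * k + 5)))%N ?C4 //; lia.
Qed.

Lemma trv00 (e : 'I_4) : trv e 0 0 = 0 :> 'rV[R]_2.
Proof. by rewrite /trv; case: ifP; rewrite vec2_0. Qed.

Lemma Gid p q z : onbd a b h z ->
  G p.+1 q.+1 z = h ^+ q *: G p.+1 1 z + h ^+ p *: G 1 q.+1 z + (- h ^+ (p + q)) *: G 1 1 z.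
Proof.
case: z => [[[|[|[|[|e]]]] He] [x y]] //=; rewrite /onbd /on_edge /G /g1 /g2 /trv /= => -[E _];
  rewrite E ?subrr.
- rewrite !vec2Z !vec2D; congr vec2; rewrite ?expr0n /=; ring.
- rewrite (_ : a + h - a = h); last by ring.
  rewrite !vec2Z !vec2D; congr vec2; rewrite ?exprS ?expr0 ?exprD; ring.
- rewrite (_ : b + h - b = h); last by ring.
  rewrite !vec2Z !vec2D; congr vec2; rewrite ?exprS ?expr0 ?exprD; ring.
- rewrite !vec2Z !vec2D; congr vec2; rewrite ?expr0n /=; ring.
Qed.

Lemma QkA K (p : {poly {poly R}}) i j : Qk K p -> (K < i \/ K < j)%N -> p`_j`_i = 0.
Proof.
case=> h1 h2 [hi|hj].
  by rewrite nth_default //; apply: leq_trans (h2 j) _.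
by rewrite (nth_default _ (leq_trans h1 hj)) coef0.
Qed.

Lemma ev2_double n (p : {poly {poly R}}) s t : Qk k.+1 p -> (k.+2 <= n)%N ->
  ev2 p s t = \sum_(0 <= i < n) \sum_(0 <= j < n) p`_j`_i * s ^+ i * t ^+ j.
Proof.
case=> h1 h2 hn.
rewrite (ev2E _ _ (leq_trans h1 hn)) exchange_big /= big_mkord; apply: eq_bigr => j _.
rewrite (horner_coef_wide _ (leq_trans (h2 j) hn)) mulr_suml big_mkord.
by apply: eq_bigr => i _.
Qed.

Lemma sum0_nat n (F : nat -> R) : (forall i, (i < n)%N -> F i = 0) -> \sum_(0 <= i < n) F i = 0.
Proof. by move=> H; rewrite big_mkord big1 // => i _; apply: H. Qed.

Lemma nz1 i : (1 + i%:R : R) != 0.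
Proof. by rewrite addrC natr1 natS_neq0. Qed.
Lemma nz2 i : (i%:R + 1 : R) != 0.
Proof. by rewrite natr1 natS_neq0. Qed.

Lemma trv_sum1 (e : 'I_4) (I : Type) (r : seq I) (F1 F2 : I -> R) :
  \sum_(i <- r) trv e (F1 i) (F2 i) = trv e (\sum_(i <- r) F1 i) (\sum_(i <- r) F2 i).
Proof. by rewrite /trv; case: ifP => _; rewrite vec2_sum; congr vec2; rewrite big1. Qed.

Lemma Sp_G i j m : (m < (4 * k + 4).+1)%N -> ix m = i -> jx m = j -> Sp (G i j).
Proof. by move=> hm <- <-; apply: Sp_fam. Qed.

Lemma W_span f : Wtraces k.+1 f -> Sp f.
Proof.
move=> [w1 [w2 [Q1 [Q2 [curl Hf]]]]].
pose v1 := shift a b w1; pose v2 := shift a b w2.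
have Qv1 : Qk k.+1 v1 by apply: Qk_shift.
have Qv2 : Qk k.+1 v2 by apply: Qk_shift.
have curl' : dx v2 = dy v1.
  by rewrite /v1 /v2 dx_shift dy_shift; congr shift; apply/eqP; rewrite -subr_eq0 curl.
have cA : forall i j, v2`_j`_i.+1 * i.+1%:R = v1`_j.+1`_i * j.+1%:R.
  move=> i j; have := congr1 (fun r : {poly {poly R}} => r`_j`_i) curl'.
  by rewrite /dx /dy coef_map_id0 ?deriv0 // coef_deriv coef_deriv coefMn !mulr_natr.
pose n := k.+3.
pose d := fun i j : nat => if i is i'.+1 then v1`_j`_i' / i%:R
                          else if j is j'.+1 then v2`_j'`_0 / j%:R else 0.
have ev1 : forall x y, ev2 w1 x y = \sum_(0 <= i < n) \sum_(0 <= j < n) v1`_j`_i * (x - a) ^+ i * (y - b) ^+ j.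
  by move=> x y; rewrite -(@ev2_double n v1 (x - a) (y - b) Qv1) // /v1 ev2_shift !subrK.
have ev2' : forall x y, ev2 w2 x y = \sum_(0 <= i < n) \sum_(0 <= j < n) v2`_j`_i * (x - a) ^+ i * (y - b) ^+ j.
  by move=> x y; rewrite -(@ev2_double n v2 (x - a) (y - b) Qv2) // /v2 ev2_shift !subrK.
have Cl1 : forall s t, \sum_(0 <= i < n) \sum_(0 <= j < n) d i j * g1 i j s t
    = \sum_(0 <= i < n) \sum_(0 <= j < n) v1`_j`_i * s ^+ i * t ^+ j.
  move=> s t; rewrite exchange_big [RHS]exchange_big; apply: eq_bigr => j _ /=.
  rewrite big_nat_recl // [RHS]big_nat_recr //= {1}/g1 !mul0r mulr0 add0r.
  rewrite (@QkA k.+1 v1 k.+2 j Qv1); last by left.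
  rewrite !mul0r addr0; apply: eq_bigr => i _; rewrite /d /g1 /=.
  by field; rewrite nz1.
have Cl2 : forall s t, \sum_(0 <= i < n) \sum_(0 <= j < n) d i j * g2 i j s t
    = \sum_(0 <= i < n) \sum_(0 <= j < n) v2`_j`_i * s ^+ i * t ^+ j.
  move=> s t; apply: eq_bigr => i _.
  rewrite big_nat_recl // [RHS]big_nat_recr //= {1}/g2 !mul0r mulr0 add0r.
  rewrite (@QkA k.+1 v2 i k.+2 Qv2); last by right.
  rewrite !mul0r addr0; apply: eq_bigr => j _; rewrite /d /g2 /=.
  case: i => [|i] /=; first by field; rewrite ?nz1 ?nz2 ?natS_neq0.
  have E2 : v2`_j`_i.+1 = v1`_j.+1`_i * j.+1%:R / i.+1%:R by rewrite -cA mulfK // natS_neq0.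
  by rewrite E2; field; rewrite ?nz1 ?nz2 ?natS_neq0.
apply: (Sp_ext (g' := fun z => \sum_(0 <= i < n) \sum_(0 <= j < n) d i j *: G i j z)).
  move=> z _; rewrite Hf ntan_vec2 ev1 ev2' -Cl1 -Cl2 /G.
  under [RHS]eq_bigr do rewrite trv_sum.
  by rewrite trv_sum1.
apply: (Sp_sum (F := fun i z => \sum_(0 <= j < n) d i j *: G i j z)) => i hi.
apply: (Sp_sum (F := fun j z => d i j *: G i j z)) => j hj.
have zeroT : forall g : bpt R -> 'rV[R]_2, Sp (fun z => 0 *: g z).
  by move=> g; apply: (Sp_ext (g' := fun _ => 0)) => [z _|]; [rewrite scale0r | exact: Sp0].
case: i hi => [|p] hi; case: j hj => [|q] hj.
- apply: (Sp_ext (g' := fun _ => 0)) => [z _|]; last exact: Sp0.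
  by rewrite /G /g1 /g2 !mul0r trv00 scaler0.
- apply: SpZ; apply: (@Sp_G _ _ (k.+2 + q)); [lia | exact: (fam2 _).1 | exact: (fam2 _).2].
- apply: SpZ; apply: (@Sp_G _ _ p); [lia | exact: (fam1 _).1 | exact: (fam1 _).2].
case: (eqVneq p k.+1) => [Ep|np].
  have -> : d p.+1 q.+1 = 0.
    rewrite /d Ep; have := cA k.+1 q.
    rewrite (@QkA k.+1 v2 k.+2 q Qv2); last by left.
    by rewrite mul0r => /esym /eqP; rewrite mulf_eq0 (negbTE (natS_neq0 _)) orbF => /eqP ->; rewrite mul0r.
  exact: zeroT.
case: (eqVneq q k.+1) => [Eq|nq].
  have -> : d p.+1 q.+1 = 0 by rewrite /d Eq (@QkA k.+1 v1 p k.+2 Qv1) ?mul0r //; right.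
  exact: zeroT.
have hp : (p < k.+1)%N by move: hi np => /=; rewrite /n; lia.
have hq : (q < k.+1)%N by move: hj nq => /=; rewrite /n; lia.
apply: (Sp_ext (g' := fun z => d p.+1 q.+1 *: (h ^+ q *: G p.+1 1 z + h ^+ p *: G 1 q.+1 z + (- h ^+ (p + q)) *: G 1 1 z))).
  by move=> z hz; rewrite Gid.
have G11 : Sp (G 1 1).
  by apply: (@Sp_G _ _ (2 * k + 4 + 0)); [lia | exact: (fam3 (p := 0) _).1 | exact: (fam3 (p := 0) _).2].
apply: SpZ; apply: SpD; [apply: SpD|]; apply: SpZ => //.
  by apply: (@Sp_G _ _ (2 * k + 4 + p)); [lia | exact: (fam3 _).1 | exact: (fam3 _).2].
case: q hj nq hq => [|q] hj nq hq //.
by apply: (@Sp_G _ _ (3 * k + 5 + q)); [lia | exact: (fam4 _).1 | exact: (fam4 _).2].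
Qed.

Lemma dimW : 0 < h -> has_dim_on (onbd a b h) (Wtraces k.+1) (4 * k + 4).+1.
Proof.
move=> h0; exists eW; split; first exact: eW_in.
split; first by move=> c Hc; apply: W_indep.
exact: W_span.
Qed.

End W.

Theorem lemma5p8 (R : realFieldType) (a b h : R) (k : nat) :
  0 < h -> (1 <= k)%N -> I_M_eq a b h k 2.
Proof.
move=> h0; case: k => [//|k] _.
exists (4 * k.+1 + 3).+1, 1%N, (4 * k + 4).+1.
split; first exact: dimM.
split; first exact: dimV.
split; first exact: dimW.
lia.
Qed.
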